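(* Let $\mathsf{T}$ be a rooted plane tree. The ornamentation lattice $\mathcal{O}(\mathsf{T})$ is semidistributive.
   Context: A rooted plane tree $\mathsf{T}$ is a finite tree with a distinguished root, regarded as a poset in which $v'\leq v$ iff $v$ lies on the path from $v'$ to the root. An ornament is a nonempty set of nodes inducing a connected subgraph; an ornamentation is a map $\delta$ from nodes to ornaments such that the unique maximal element of $\delta(v)$ is $v$ and any two sets $\delta(v),\delta(v')$ are nested or disjoint. $\mathcal{O}(\mathsf{T})$ is the set of ornamentations ordered by $\delta\leq\delta'$ iff $\delta(v)\subseteq\delta'(v)$ for all $v$ (a lattice). A finite lattice $L$ is semidistributive if for all $a\leq b$ in $L$, the set $\{z\in L:z\wedge b=a\}$ has a maximum element and the set $\{z\in L:z\vee a=b\}$ has a minimum element. *)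

(* Defs.v *)
From mathcomp Require Import all_boot.
Set Implicit Arguments. Unset Strict Implicit. Unset Printing Implicit Defensive.

Section Tree.
Variables (V : finType) (root : V) (par : V -> V).

(* A rooted tree on the finite node set V: par is the parent map, the root is
   its own "parent", and every node reaches the root by iterating par. *)
Definition rooted_tree : Prop := par root = root /\ forall v, fconnect par v root.

Definition tle (u v : V) : bool := fconnect par u v.

Definition tadj (u v : V) : bool := (u != v) && ((par u == v) || (par v == u)).

Definition induced_connected (A : {set V}) : Prop :=
  forall x y, x \in A -> y \in A ->
    connect (fun a b => [&& a \in A, b \in A & tadj a b]) x y.

Definition ornament (A : {set V}) : Prop := A != set0 /\ induced_connected A.

Definition tmaximal (A : {set V}) (x : V) : Prop :=
  x \in A /\ forall y, y \in A -> tle x y -> y = x.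

Definition ornamentation (d : V -> {set V}) : Prop :=
  (forall v, ornament (d v)) /\
  (forall v x, tmaximal (d v) x <-> x = v) /\
  (forall v v', d v \subset d v' \/ d v' \subset d v \/ [disjoint d v & d v']).

Definition ole (d d' : V -> {set V}) : Prop := forall v, d v \subset d' v.

Definition is_meet (x y m : V -> {set V}) : Prop :=
  ornamentation m /\ ole m x /\ ole m y /\
  forall w, ornamentation w -> ole w x -> ole w y -> ole w m.

Definition is_join (x y j : V -> {set V}) : Prop :=
  ornamentation j /\ ole x j /\ ole y j /\
  forall w, ornamentation w -> ole x w -> ole y w -> ole j w.

Definition orn_lattice : Prop :=
  forall x y, ornamentation x -> ornamentation y ->
    (exists m, is_meet x y m) /\ (exists j, is_join x y j).

(* semidistributivity, with  z /\ b = a  read as "a is the meet of z and b" *)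
Definition orn_semidistributive : Prop :=
  forall a b, ornamentation a -> ornamentation b -> ole a b ->
    (exists zm, ornamentation zm /\ is_meet zm b a /\
       forall z, ornamentation z -> is_meet z b a -> ole z zm) /\
    (exists zm, ornamentation zm /\ is_join zm a b /\
       forall z, ornamentation z -> is_join z a b -> ole zm z).

End Tree.

(* Main.v *)
Require Import Defs.
From mathcomp Require Import all_boot.
From Stdlib Require Import Classical.
From mathcomp Require Import zify.
Set Implicit Arguments. Unset Strict Implicit. Unset Printing Implicit Defensive.

Section S.
Variables (V : finType) (root : V) (par : V -> V).
Hypothesis Ht : rooted_tree root par.

Notation tle := (tle par).

Lemma tle_refl u : tle u u.
Proof. exact: connect0. Qed.

Lemma tle_trans u v w : tle u v -> tle v w -> tle u w.
Proof. exact: connect_trans. Qed.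

Lemma tle_par u : tle u (par u).
Proof. exact: fconnect1. Qed.

Lemma tleP u v : tle u v -> exists n, iter n par u = v.
Proof. move=> h; exists (findex par u v); exact: iter_findex. Qed.

Lemma tle_iter n u : tle u (iter n par u).
Proof. exact: fconnect_iter. Qed.

Lemma iter_root n : iter n par root = root.
Proof. case: Ht => hr _; elim: n => //= n ->; exact: hr. Qed.

Lemma tle_anti u v : tle u v -> tle v u -> u = v.
Proof.
case: Ht => hr hc.
move=> /tleP [n hn] /tleP [m hm].
case: n hn => [|n] hn; first by [].
have cyc : forall j, iter (j * (n.+1 + m)) par u = u.
  elim=> [|j IH]; first by [].
  by rewrite mulSn iterD IH addnC iterD hn hm.
have [k hk] := tleP (hc u).
have : iter (k * (n.+1 + m)) par u = root.
  have hle : k <= k * (n.+1 + m) by rewrite leq_pmulr // addSn.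
  by rewrite -(subnK hle) iterD hk iter_root.
rewrite cyc => hu; move: hn; rewrite hu iter_root => <-; by [].
Qed.

Lemma tle_step u v : tle u v -> u = v \/ tle (par u) v.
Proof.
move=> /tleP [[|n] <-]; [by left | right].
by rewrite iterSr; apply: tle_iter.
Qed.

Lemma tle_total u v w : tle u v -> tle u w -> tle v w || tle w v.
Proof.
move=> /tleP [n <-] /tleP [m <-].
case: (leqP n m) => h.
  by rewrite -(subnK h) iterD tle_iter.
by rewrite -(subnK (ltnW h)) iterD tle_iter orbT.
Qed.


Definition goodset (v : V) (A : {set V}) : Prop :=
  v \in A /\ (forall u, u \in A -> tle u v) /\ (forall u, u \in A -> u != v -> par u \in A).

Notation erel A := (fun a b => [&& a \in A, b \in A & tadj par a b]).

Lemma good_conv v A u t : goodset v A -> u \in A -> tle u t -> tle t v -> t \in A.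
Proof.
case=> hv [hl hp] uA /tleP [n <-]; elim: n u uA => [|n IH] u uA //.
rewrite iterSr => htv.
have [e|nuv] := eqVneq u v.
  subst u.
  have e : iter n par (par v) = v by apply: tle_anti htv (tle_trans (tle_par v) (tle_iter _ _)).
  by rewrite e.
by apply: IH => //; apply: hp.
Qed.

Lemma good_orn v A : goodset v A -> ornament par A /\ (forall x, tmaximal par A x <-> x = v).
Proof.
move=> G; have [hv [hl hp]] := G.
have conn : forall x, x \in A -> connect (erel A) x v.
  move=> x xA; have [n hn] := tleP (hl x xA).
  elim: n x xA hn => [|n IH] x xA hn; first by rewrite -hn connect0.
  have [->|nxv] := eqVneq x v; first exact: connect0.
  have pxA := hp x xA nxv.
  apply: (connect_trans (y := par x)); last by apply: IH => //; rewrite -iterSr.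
  apply: connect1; rewrite xA pxA /tadj eqxx /= andbT.
  apply/eqP => e; move/eqP: nxv; apply; rewrite -hn.
  have fx : forall k, iter k par x = x by elim=> //= k ->; rewrite -e.
  by rewrite fx.
split; first split.
- by apply/set0Pn; exists v.
- move=> x y xA yA; apply: (connect_trans (conn x xA)).
  have sy : connect_sym (erel A).
    apply: sym_connect_sym => a b /=.
    by rewrite /tadj; case: (a \in A); case: (b \in A); rewrite //= eq_sym orbC.
  rewrite sy; exact: conn.
- move=> x; split.
  + case=> xA hm; symmetry; apply: hm => //; exact: hl.
  + move=> ->; split => // y yA hvy; apply: tle_anti => //; exact: hl.
Qed.

Lemma orn_good v A : ornament par A -> (forall x, tmaximal par A x <-> x = v) -> goodset v A.
Proof.
case=> hne hc hm.
have [vA _] := (proj2 (hm v) erefl).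
have hl : forall u, u \in A -> tle u v.
  move=> u uA.
  pose sz w := #|[set t | tle t w]|.
  have h0 : (u \in A) && tle u u by rewrite uA tle_refl.
  case: (@arg_maxnP _ u (fun w => (w \in A) && tle u w) sz h0) => w /andP [wA uw] wmax.
  suff : w = v by move=> <-.
  apply/hm; split => // y yA wy.
  have hs : [set t | tle t w] \subset [set t | tle t y].
    by apply/subsetP => t; rewrite !inE => tw; apply: tle_trans tw wy.
  have := wmax y; rewrite yA (tle_trans uw wy) => /(_ isT) hsz.
  have e : [set t | tle t w] = [set t | tle t y].
    by apply/eqP; rewrite eqEcard hs; exact: hsz.
  have : y \in [set t | tle t y] by rewrite inE tle_refl.
  rewrite -e inE => yw; exact: tle_anti.
split => //; split => // u uA nuv.
have /connectP [p pth lst] := hc u v uA vA.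
have nvu : ~~ tle v u by apply/negP => vu; move/eqP: nuv; apply; exact: tle_anti (hl u uA) vu.
have key : forall p x, x \in A -> tle x u -> path (erel A) x p -> last x p = v -> par u \in A.
  elim=> [|t q IH] x xA xu /=.
    by move=> _ lx; move: nvu; rewrite -lx xu.
  case/andP => /and3P [_ tA ad] pth2 lst2.
  case tu: (tle t u); first exact: IH tA tu pth2 lst2.
  move: ad; rewrite /tadj => /andP [nxt /orP [/eqP pxt | /eqP ptx]].
    have [exu | pxu] := tle_step xu; first by rewrite -exu pxt.
    by rewrite pxt tu in pxu.
  have : tle t u by apply: tle_trans xu; rewrite -ptx; exact: tle_par.
  by rewrite tu.
exact: key p u uA (tle_refl u) pth (esym lst).
Qed.


Definition ornR (d : V -> {set V}) : Prop :=
  (forall v, goodset v (d v)) /\ (forall u v w, u \in d w -> w \in d v -> u \in d v).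

Lemma ornP d : ornamentation par d <-> ornR d.
Proof.
split.
  case=> ho [hm hn].
  have hg : forall v, goodset v (d v) by move=> v; apply: orn_good.
  split => // u v w uw wv.
  case: (hn w v) => [/subsetP s | [/subsetP s | dj]]; first exact: s.
    have vw := s v (proj1 (hg v)).
    have e : v = w by apply: tle_anti ((proj1 (proj2 (hg w))) v vw) ((proj1 (proj2 (hg v))) w wv).
    by rewrite e.
  by move: (disjointFr dj (proj1 (hg w))); rewrite wv.
case=> hg ht; split; last split.
- by move=> v; case: (good_orn (hg v)).
- by move=> v x; case: (good_orn (hg v)) => _; apply.
move=> v v'.
case: (pickP (fun u => (u \in d v) && (u \in d v'))) => [u /andP [uv uv'] | none].
  have := tle_total ((proj1 (proj2 (hg v))) u uv) ((proj1 (proj2 (hg v'))) u uv').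
  case/orP => h.
    left; apply/subsetP => x xv; apply: (ht x v' v xv).
    apply: good_conv (hg v') uv' _ h; exact: (proj1 (proj2 (hg v))) u uv.
  right; left; apply/subsetP => x xv; apply: (ht x v v' xv).
  apply: good_conv (hg v) uv _ h; exact: (proj1 (proj2 (hg v'))) u uv'.
right; right; apply/pred0P => x /=; exact: none x.
Qed.


Definition Q (x y : V -> {set V}) : rel V := fun a b => (a \in x b) || (a \in y b).
Definition J (x y : V -> {set V}) (v : V) : {set V} := [set u | connect (Q x y) u v].
Definition M (x y : V -> {set V}) (v : V) : {set V} := x v :&: y v.

Lemma connect_closed (e R : rel V) :
  (forall a, R a a) -> (forall a b c, R a b -> R b c -> R a c) ->
  (forall a b, e a b -> R a b) -> forall a b, connect e a b -> R a b.
Proof.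
move=> hr ht he a b /connectP [p pth ->] {b}.
elim: p a pth => [|t p IH] a /=; first by move=> _; apply: hr.
case/andP => eat pth; apply: ht (he _ _ eat) (IH _ pth).
Qed.

Lemma path_mid (e : rel V) u p s : path e u p -> s \in u :: p ->
  connect e u s /\ connect e s (last u p).
Proof.
elim: p u => [|t p IH] u /=.
  by move=> _; rewrite inE => /eqP ->; split; apply: connect0.
case/andP => eut pth; rewrite inE => /orP [/eqP ->|sin].
  split; first exact: connect0.
  apply/connectP; exists (t :: p) => //=; by rewrite eut.
have [h1 h2] := IH t pth sin; split => //.
exact: connect_trans (connect1 eut) h1.
Qed.

Lemma path_two (e : rel V) u v p : last u p = v -> path e u p ->
  all (fun s => (s == u) || (s == v)) p -> u = v \/ e u v.
Proof.
elim: p => [|t p IH] /=; first by left.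
move=> lst /andP [eut pth] /andP [/orP [/eqP tu | /eqP tv] al].
  subst t; apply: IH => //.
by right; rewrite -tv.
Qed.

Lemma meet_orn x y : ornR x -> ornR y -> ornR (M x y).
Proof.
case=> gx tx [gy ty]; split.
  move=> v; have [vx [lx px]] := gx v; have [vy [ly py]] := gy v.
  split; first by rewrite inE vx vy.
  split=> u; rewrite inE => /andP [ux uy]; first exact: lx.
  by move=> nuv; rewrite inE px // py.
move=> u v w; rewrite !inE => /andP [a1 a2] /andP [b1 b2].
by rewrite (tx _ _ _ a1 b1) (ty _ _ _ a2 b2).
Qed.

Lemma join_orn x y : ornR x -> ornR y -> ornR (J x y).
Proof.
case=> gx tx [gy ty]; split; last first.
  by move=> u v w; rewrite !inE; apply: connect_trans.
move=> v; split; first by rewrite inE connect0.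
split.
  move=> u; rewrite inE; apply: connect_closed.
  - exact: tle_refl.
  - exact: tle_trans.
  - move=> a b /orP [h|h]; [exact: (proj1 (proj2 (gx b))) | exact: (proj1 (proj2 (gy b)))].
move=> u; rewrite inE => /connectP [p pth lst] nuv; rewrite inE.
elim: p u pth lst nuv => [|t p IH] u /=; first by move=> _ -> ; rewrite eqxx.
case/andP => eut pth lst nuv.
have [etu | ntu] := eqVneq t u; first by subst t; apply: IH.
have hc : connect (Q x y) t v by apply/connectP; exists p.
apply: connect_trans hc; apply: connect1.
case/orP: eut => h; rewrite /Q.
  by rewrite (proj2 (proj2 (gx t)) u h) // eq_sym.
by rewrite (proj2 (proj2 (gy t)) u h) ?orbT // eq_sym.
Qed.

Lemma join_least (x y w : V -> {set V}) : ornR w -> (forall v, x v \subset w v) -> (forall v, y v \subset w v) ->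
  forall v, J x y v \subset w v.
Proof.
case=> gw tw hx hy v; apply/subsetP => u; rewrite inE.
apply: (connect_closed (R := fun a b => a \in w b)).
- by move=> a; case: (gw a).
- by move=> a b c ab bc; apply: tw ab bc.
- by move=> a b /orP [h|h]; [apply: (subsetP (hx b)) | apply: (subsetP (hy b))].
Qed.

Lemma join_ub (x y : V -> {set V}) v : x v \subset J x y v.
Proof. by apply/subsetP => u h; rewrite inE connect1 // /Q h. Qed.

Lemma join_ub2 (x y : V -> {set V}) v : y v \subset J x y v.
Proof. by apply/subsetP => u h; rewrite inE connect1 // /Q h orbT. Qed.


Lemma is_meetE x y m : ornR x -> ornR y -> ornR m ->
  (is_meet par x y m <-> forall v, m v = M x y v).
Proof.
move=> ox oy om; split.
  case=> _ [mx [my mmax]] v; apply/eqP; rewrite eqEsubset; apply/andP; split.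
    by rewrite subsetI mx my.
  by apply: mmax; [apply/ornP; apply: meet_orn | move=> w; apply: subsetIl | move=> w; apply: subsetIr].
move=> e; split; first by apply/ornP.
split; first by move=> v; rewrite e subsetIl.
split; first by move=> v; rewrite e subsetIr.
by move=> w _ wx wy v; rewrite e subsetI wx wy.
Qed.

Lemma is_joinE x y j : ornR x -> ornR y -> ornR j ->
  (is_join par x y j <-> forall v, j v = J x y v).
Proof.
move=> ox oy oj; split.
  case=> _ [xj [yj jmin]] v; apply/eqP; rewrite eqEsubset; apply/andP; split.
    by apply: jmin; [apply/ornP; apply: join_orn | move=> w; apply: join_ub | move=> w; apply: join_ub2].
  exact: join_least.
move=> e; split; first by apply/ornP.
split; first by move=> v; rewrite e join_ub.
split; first by move=> v; rewrite e join_ub2.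
by move=> w /ornP ow xw yw v; rewrite e; apply: join_least.
Qed.

Definition msize (d : V -> {set V}) := \sum_(v : V) #|d v|.

Lemma msize_le d : msize d <= \sum_(v : V) #|V|.
Proof. by apply: leq_sum => v _; apply: max_card. Qed.

Lemma msize_eq (w z : V -> {set V}) : (forall v, w v \subset z v) -> msize z <= msize w ->
  forall v, z v \subset w v.
Proof.
move=> hwz hle v; apply/negPn/negP => ns.
have hp : w v \proper z v by rewrite properE hwz ns.
have := proper_card hp.
move: hle; rewrite /msize (bigD1 v) //= [X in _ <= X](bigD1 v) //=.
have hs : \sum_(i | i != v) #|w i| <= \sum_(i | i != v) #|z i|.
  by apply: leq_sum => i _; apply: subset_leq_card.
move: hs; set A := \sum_(i | i != v) _; set B := \sum_(i | i != v) _.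
move=> hs h1 h2.
have := leq_add h2 hs; rewrite addSn => h3.
have := leq_trans h3 h1; by rewrite ltnn.
Qed.

Lemma msize_max (P : (V -> {set V}) -> Prop) z0 : P z0 ->
  exists z, P z /\ forall z', P z' -> msize z' <= msize z.
Proof.
set N := \sum_(v : V) #|V|.
suff : forall n z, P z -> N - msize z <= n -> exists z, P z /\ forall z', P z' -> msize z' <= msize z.
  by move=> h Pz0; apply: (h _ z0 Pz0 (leqnn _)).
elim=> [|n IH] z Pz hn;
  (case: (classic (exists z', P z' /\ msize z < msize z')) => [[z' [Pz' lt]] | no];
   last by exists z; split => // z' Pz'; rewrite leqNgt; apply/negP => lt; apply: no; exists z').
  have := msize_le z'; rewrite -/N => hz'.
  have : N <= msize z by rewrite -subn_eq0 -leqn0.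
  by move=> h; have := leq_trans lt (leq_trans hz' h); rewrite ltnn.
apply: (IH z' Pz'); have := msize_le z'; rewrite -/N => hz'.
lia.
Qed.


Lemma msize_min (P : (V -> {set V}) -> Prop) z0 : P z0 ->
  exists z, P z /\ forall z', P z' -> msize z <= msize z'.
Proof.
suff : forall n z, P z -> msize z <= n -> exists z, P z /\ forall z', P z' -> msize z <= msize z'.
  by move=> h Pz0; apply: (h _ z0 Pz0 (leqnn _)).
elim=> [|n IH] z Pz hn;
  (case: (classic (exists z', P z' /\ msize z' < msize z)) => [[z' [Pz' lt]] | no];
   last by exists z; split => // z' Pz'; rewrite leqNgt; apply/negP => lt; apply: no; exists z').
  lia.
apply: (IH z' Pz'); lia.
Qed.

Lemma sdm_key (z1 z2 a b : V -> {set V}) : ornR z1 -> ornR z2 -> ornR b ->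
  (forall v, a v = M z1 b v) -> (forall v, a v = M z2 b v) ->
  forall u v, u \in J z1 z2 v -> u \in b v -> u \in a v.
Proof.
case=> g1 t1 [g2 t2] [gb tb] h1 h2 u v; rewrite inE => /connectP [p pth lst].
elim: p u pth lst => [|t p IH] u /=; first by move=> _ <- _; rewrite h1 inE (proj1 (g1 _)) (proj1 (gb _)).
case/andP => Qut pth lst ub.
have ut : tle u t by case/orP: Qut => h; [exact: (proj1 (proj2 (g1 t))) | exact: (proj1 (proj2 (g2 t)))].
have tv : tle t v.
  have : connect (Q z1 z2) t v by apply/connectP; exists p.
  apply: connect_closed; [exact: tle_refl | exact: tle_trans |].
  by move=> c d /orP [h|h]; [exact: (proj1 (proj2 (g1 d))) | exact: (proj1 (proj2 (g2 d)))].
have tbv : t \in b v by apply: good_conv (gb v) ub ut tv.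
have ta := IH t pth lst tbv.
case/orP: Qut => h.
  move: (ta); rewrite h1 !inE => /andP [tz _].
  by rewrite (t1 _ _ _ h tz) ub.
move: (ta); rewrite h2 !inE => /andP [tz _].
by rewrite (t2 _ _ _ h tz) ub.
Qed.


Definition mes u v := #|[set t | tle u t && tle t v]|.

Lemma mes_lt1 u s v : tle u s -> tle s v -> s != v -> mes u s < mes u v.
Proof.
move=> us sv nsv; apply: proper_card; rewrite properE; apply/andP; split.
  apply/subsetP => t; rewrite !inE => /andP [ut ts]; by rewrite ut (tle_trans ts sv).
apply/subsetPn; exists v; first by rewrite inE (tle_trans us sv) tle_refl.
rewrite inE negb_and; apply/orP; right; apply/negP => vs.
by move/eqP: nsv; apply; apply: tle_anti.
Qed.

Lemma mes_lt2 u s v : tle u s -> tle s v -> s != u -> mes s v < mes u v.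
Proof.
move=> us sv nsu; apply: proper_card; rewrite properE; apply/andP; split.
  apply/subsetP => t; rewrite !inE => /andP [st tv]; by rewrite tv (tle_trans us st).
apply/subsetPn; exists u; first by rewrite inE (tle_trans us sv) tle_refl.
rewrite inE negb_and; apply/orP; left; apply/negP => su.
by move/eqP: nsu; apply; apply: tle_anti.
Qed.

Lemma sdj_step (x y a b : V -> {set V}) : ornR x -> ornR y -> ornR a -> ornR b ->
  (forall v, b v = J x a v) -> (forall v, b v = J y a v) -> forall u v,
  (forall u' v', mes u' v' < mes u v -> u' \in b v' -> u' \in J (M x y) a v') ->
  u \in b v -> u \in J (M x y) a v.
Proof.
move=> ox oy oa ob hx hy u v IH ub.
have oc := join_orn (meet_orn ox oy) oa.
have claim : forall d, (forall v, b v = J d a v) -> u \in J (M x y) a v \/ u \in d v.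
  move=> d hd; have : u \in J d a v by rewrite -hd.
  rewrite inE => /connectP [p pth lst].
  case: (boolP (all (fun s => (s == u) || (s == v)) p)) => al.
    case: (path_two (esym lst) pth al) => [-> | /orP [h|h]].
    - by left; rewrite inE connect0.
    - by right.
    - by left; rewrite inE connect1 // /Q h orbT.
  move: al => /allPn [s sin /norP [nsu nsv]].
  have sin' : s \in u :: p by rewrite inE sin orbT.
  have [us sv] := path_mid pth sin'; rewrite -lst in sv.
  have usb : u \in b s by rewrite hd inE.
  have svb : s \in b v by rewrite hd inE.
  have tus : tle u s by exact: (proj1 (proj2 ((proj1 ob) s))).
  have tsv : tle s v by exact: (proj1 (proj2 ((proj1 ob) v))).
  have h1 := IH u s (mes_lt1 tus tsv nsv) usb.
  have h2 := IH s v (mes_lt2 tus tsv nsu) svb.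
  left; exact: (proj2 oc u v s h1 h2).
case: (claim x hx) => [//|ux]; case: (claim y hy) => [//|uy].
by rewrite inE connect1 // /Q /M inE ux uy.
Qed.

Lemma sdj_key (x y a b : V -> {set V}) : ornR x -> ornR y -> ornR a -> ornR b ->
  (forall v, b v = J x a v) -> (forall v, b v = J y a v) -> forall u v,
  u \in b v -> u \in J (M x y) a v.
Proof.
move=> ox oy oa ob hx hy.
suff : forall n u v, mes u v <= n -> u \in b v -> u \in J (M x y) a v.
  by move=> h u v; apply: (h _ u v (leqnn _)).
elim=> [|n IH] u v hm; apply: (sdj_step ox oy oa ob hx hy) => u' v' lt.
  lia.
apply: IH; lia.
Qed.


Lemma main_thm : orn_lattice par /\ orn_semidistributive par.
Proof.
split.
  move=> x y /ornP ox /ornP oy; split.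
    by exists (M x y); apply/(is_meetE ox oy (meet_orn ox oy)).
  by exists (J x y); apply/(is_joinE ox oy (join_orn ox oy)).
move=> a b /ornP oa /ornP ob ab; split.
  pose P z := ornR z /\ forall v, a v = M z b v.
  have Pa : P a by split => // v; apply/esym/setIidPl; exact: ab.
  have [z [[oz hz] zmax]] := msize_max Pa.
  exists z; split; first by apply/ornP.
  split; first by apply/(is_meetE oz ob oa).
  move=> z' /ornP oz' /(is_meetE oz' ob oa) hz'.
  have ow := join_orn oz oz'.
  have hw : forall v, a v = M (J z z') b v.
    move=> v; apply/eqP; rewrite eqEsubset; apply/andP; split.
      by rewrite hz /M; apply: setSI; apply: join_ub.
    apply/subsetP => u; rewrite inE => /andP [uw ub].
    exact: (sdm_key oz oz' ob hz hz' uw ub).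
  have hle := zmax _ (conj ow hw).
  have e := msize_eq (join_ub z z') hle.
  by move=> v; apply: subset_trans (join_ub2 z z' v) (e v).
pose P z := ornR z /\ forall v, b v = J z a v.
have Pb : P b.
  split => // v; apply/eqP; rewrite eqEsubset; apply/andP; split; first exact: join_ub.
  by apply: join_least => // w.
have [z [[oz hz] zmin]] := msize_min Pb.
exists z; split; first by apply/ornP.
split; first by apply/(is_joinE oz oa ob).
move=> z' /ornP oz' /(is_joinE oz' oa ob) hz'.
have ow := meet_orn oz oz'.
have hw : forall v, b v = J (M z z') a v.
  move=> v; apply/eqP; rewrite eqEsubset; apply/andP; split.
    by apply/subsetP => u ub; apply: (sdj_key oz oz' oa ob hz hz').
  apply: join_least => // w.
  by apply: subset_trans (subsetIl _ _) _; rewrite hz join_ub.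
have hle := zmin _ (conj ow hw).
have e := msize_eq (fun v => subsetIl (z v) (z' v)) hle.
by move=> v; apply: subset_trans (e v) (subsetIr _ _).
Qed.

End S.

Theorem theorem6p2 (V : finType) (root : V) (par : V -> V) :
  rooted_tree root par ->
  orn_lattice par /\ orn_semidistributive par.
Proof. move=> Ht; exact: (main_thm Ht). Qed.
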